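(* Let $n\ge1$, $m\ge1$ be integers, $q=\exp\bigl(\tfrac{2\pi i}{m+n+1}\bigr)$, and consider $$\partial^{n+1}y+(-1)^n\,(x^m+\lambda^{n+1})\,y=0,\qquad \partial=\tfrac{d}{dx},\ \lambda\in\mathbb{C}.$$ Let $y(x,\lambda)$ be a solution for each $\lambda$ (in the paper: the subdominant solution in the sector $|\arg x|\le\pi/(m+n+1)$), put $y_k(x,\lambda)=q^{nk/2}y(xq^{-k},\lambda q^k)$, and assume $y_k,\dots,y_{k+n}$ are linearly independent for every $k\in\mathbb{Z}$. Let $\Phi_k$ be the matrix with $(i+1,j+1)$ entry $\partial^iy_{k+j}$ ($0\le i,j\le n$), let $S^{(\ell)}_k$ ($\ell\ge1$) be defined by $\Phi_k=\Phi_{k+\ell}S^{(\ell)}_k$, let $S^{(\ell)}(\lambda)$ denote $S^{(\ell)}_0$ as a function of $\lambda$ (so $S^{(\ell)}_k=S^{(\ell)}(\lambda q^k)$) with entries $S^{(\ell)}_{i,j}(\lambda)$, and let $\tau^{(a)}(\lambda)=S^{(1)}_{a,1}(\lambda)$. Define $T^{(1)}_\ell(\lambda)=S^{(\ell)}_{1,1}(\lambda q^{-(\ell-1)/2})$ for $\ell\ge1$, $T^{(1)}_0=1$, $T^{(1)}_\ell=0$ for $\ell<0$, and $T^{(a)}_1(\lambda)=(-1)^{a+1}\tau^{(a)}(\lambda q^{-(a-1)/2})$ for $1\le a\le n+1$. Then for every $1\le a\le n+1$, $$T^{(a)}_1(\lambda)=\det_{1\le i,j\le a}\Bigl(T^{(1)}_{1-i+j}\bigl(\lambda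 q^{(i+j-a-1)/2}\bigr)\Bigr).$$
   Context: Fractional powers $q^{s}$ mean $\exp\bigl(\tfrac{2\pi i s}{m+n+1}\bigr)$. The matrices $S^{(\ell)}_k$ are (generalized) Stokes matrices connecting the fundamental systems of solutions $\Phi_k$ and $\Phi_{k+\ell}$, and $\tau^{(a)}$ are the Stokes multipliers (first column of $S^{(1)}$). *)

(* Defs.v *)
From HB Require Import structures.
From mathcomp Require Import all_boot all_order all_algebra.
From mathcomp Require Import all_classical all_reals all_analysis.
From mathcomp Require Import complex.
Set Implicit Arguments. Unset Strict Implicit. Unset Printing Implicit Defensive.
Import Order.TTheory GRing.Theory Num.Theory.
Import numFieldNormedType.Exports.
Local Open Scope ring_scope.
Local Open Scope complex_scope.

Definition Cplx (R : realType) : numFieldType := R[i].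

(* fractional power q^s := exp(2 pi i s / N) with N = m+n+1 *)
Definition qpow (R : realType) (N : nat) (s : R) : Cplx R :=
  (cos (2 * pi * s / N%:R))%:C + 'i * (sin (2 * pi * s / N%:R))%:C.

Definition dern (R : realType) (k : nat) (f : Cplx R -> Cplx R) : Cplx R -> Cplx R :=
  derive1n k f.

Definition is_solution (R : realType) (n m : nat) (y : Cplx R -> Cplx R -> Cplx R) :=
  forall lam : Cplx R,
    (forall k : nat, (k <= n)%N -> forall x : Cplx R,
        derivable (dern k (fun x => y x lam)) x 1) /\
    (forall x : Cplx R,
        dern n.+1 (fun x => y x lam) x
        + (-1) ^+ n * (x ^+ m + lam ^+ n.+1) * y x lam = 0).

Definition yk (R : realType) (n m : nat) (y : Cplx R -> Cplx R -> Cplx R)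
    (k : int) (x lam : Cplx R) : Cplx R :=
  qpow (m + n + 1) ((n%:R * k%:~R) / 2) *
    y (x * qpow (m + n + 1) (- k%:~R)) (lam * qpow (m + n + 1) k%:~R).

Definition lin_indep_yk (R : realType) (n m : nat) (y : Cplx R -> Cplx R -> Cplx R) :=
  forall (k : int) (lam : Cplx R) (c : 'I_n.+1 -> Cplx R),
    (forall x : Cplx R, \sum_(j < n.+1) c j * yk n m y (k + j%:Z) x lam = 0) ->
    forall j, c j = 0.

Definition Phi (R : realType) (n m : nat) (y : Cplx R -> Cplx R -> Cplx R)
    (k : int) (x lam : Cplx R) : 'M[Cplx R]_n.+1 :=
  \matrix_(i < n.+1, j < n.+1) dern i (fun z => yk n m y (k + j%:Z) z lam) x.

Definition is_stokes (R : realType) (n m : nat) (y : Cplx R -> Cplx R -> Cplx R)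
    (S : nat -> Cplx R -> 'M[Cplx R]_n.+1) :=
  forall (l : nat), (0 < l)%N -> forall lam x : Cplx R,
    Phi n m y 0 x lam = Phi n m y l%:Z x lam *m S l lam.

Definition tau (R : realType) (n : nat) (S : nat -> Cplx R -> 'M[Cplx R]_n.+1)
    (a : nat) (lam : Cplx R) : Cplx R :=
  S 1%N lam (inord a.-1) ord0.

Definition T1 (R : realType) (n m : nat) (S : nat -> Cplx R -> 'M[Cplx R]_n.+1)
    (l : int) (lam : Cplx R) : Cplx R :=
  if (0 < l)%R then
    S `|l|%N (lam * qpow (m + n + 1) (- (l - 1)%:~R / 2)) ord0 ord0
  else if l == 0 then 1 else 0.

Definition Ta1 (R : realType) (n m : nat) (S : nat -> Cplx R -> 'M[Cplx R]_n.+1)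
    (a : nat) (lam : Cplx R) : Cplx R :=
  (-1) ^+ a.+1 * tau S a (lam * qpow (m + n + 1) (- (a%:Z - 1)%:~R / 2)).

(* Main.v *)
Require Import Defs.
From HB Require Import structures.
From mathcomp Require Import all_boot all_order all_algebra.
From mathcomp Require Import all_classical all_reals all_analysis.
From mathcomp Require Import complex.
From mathcomp Require Import ring lra zify.
Import Order.TTheory GRing.Theory Num.Theory.
Import numFieldNormedType.Exports.
Local Open Scope ring_scope.

Lemma qpowD (R : realType) N (a b : R) : qpow N a * qpow N b = qpow N (a + b).
Proof.
rewrite /qpow.
set u := 2 * pi * a / N%:R. set v := 2 * pi * b / N%:R.
have -> : 2 * pi * (a + b) / N%:R = u + v by rewrite /u /v; rewrite !mulrDr !mulrDl.
rewrite cosD sinD.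
apply/eqP; rewrite eq_complex /=.
apply/andP; split; apply/eqP; simpl; ring.
Qed.

Lemma qpow0 (R : realType) N : qpow N (0:R) = 1.
Proof.
rewrite /qpow mulr0 mul0r cos0 sin0.
apply/eqP; rewrite eq_complex /=. apply/andP; split; apply/eqP; simpl; ring.
Qed.

Lemma mulqq (R : realType) N (z : Cplx R) (a b : R) :
  z * qpow N a * qpow N b = z * qpow N (a + b).
Proof. by rewrite -mulrA qpowD. Qed.

Lemma yk_shift (R : realType) n m y (k j : int) (x lam : Cplx R) :
  yk n m y (k + j) x lam = qpow (m + n + 1) (n%:R * k%:~R / 2) *
    yk n m y j (x * qpow (m + n + 1) (- k%:~R)) (lam * qpow (m + n + 1) k%:~R).
Proof.
rewrite /yk mulrA qpowD !mulqq intrD.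
congr (qpow _ _ * y (_ * qpow _ _) (_ * qpow _ _)); ring.
Qed.

Lemma stokes_row0 (R : realType) n m y S :
  @is_stokes R n m y S -> forall (l : nat), (0 < l)%N -> forall (lam x : Cplx R) (j : 'I_n.+1),
  yk n m y j x lam = \sum_(j' < n.+1) S l lam j' j * yk n m y (l%:Z + j'%:Z) x lam.
Proof.
move=> hS l hl lam x j.
have := congr1 (fun (M : 'M[Cplx R]_(n.+1)) => M ord0 j) (hS l hl lam x).
rewrite /= /Phi !mxE /= add0r => ->.
by apply: eq_bigr => j' _; rewrite !mxE mulrC.
Qed.

Lemma stokes_k (R : realType) n m y S :
  @is_stokes R n m y S -> forall (k : int) (l : nat), (0 < l)%N ->
  forall (lam x : Cplx R) (j : 'I_n.+1),
  yk n m y (k + j%:Z) x lam = \sum_(j' < n.+1)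
     S l (lam * qpow (m + n + 1) k%:~R) j' j * yk n m y (k + l%:Z + j'%:Z) x lam.
Proof.
move=> hS k l hl lam x j.
rewrite yk_shift (@stokes_row0 _ _ _ _ _ hS _ hl) mulr_sumr.
apply: eq_bigr => j' _.
by rewrite -addrA (@yk_shift _ _ _ _ k) mulrCA.
Qed.

Lemma yk_uniq (R : realType) n m y :
  @lin_indep_yk R n m y -> forall (k : int) (lam : Cplx R) (A B : 'I_n.+1 -> Cplx R),
  (forall x, \sum_(j < n.+1) A j * yk n m y (k + j%:Z) x lam =
             \sum_(j < n.+1) B j * yk n m y (k + j%:Z) x lam) ->
  forall j, A j = B j.
Proof.
move=> hI k lam A B h j.
apply/eqP; rewrite -subr_eq0; apply/eqP.
apply: (hI k lam (fun j => A j - B j)) => x.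
under eq_bigr do rewrite mulrBl.
by rewrite sumrB h subrr.
Qed.

Definition Sp (R : realType) n (S : nat -> Cplx R -> 'M[Cplx R]_n.+1) (l : nat) (mu : Cplx R)
  : 'M[Cplx R]_n.+1 := if l is 0 then 1%:M else S l mu.
Arguments Sp {R n} S l mu.

Lemma sum_delta_yk (R : realType) n (f : 'I_n.+1 -> Cplx R) (j : 'I_n.+1) :
  \sum_(j' < n.+1) (1%:M : 'M[Cplx R]_n.+1) j' j * f j' = f j.
Proof.
rewrite (bigD1 j) //= big1 ?addr0; first by rewrite !mxE eqxx mul1r.
by move=> i hi; rewrite !mxE (negbTE hi) mul0r.
Qed.

Lemma expand_Sp (R : realType) n m y S :
  @is_stokes R n m y S -> forall (l : nat) (mu x : Cplx R) (j : 'I_n.+1),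
  yk n m y (0 + j%:Z) x mu =
  \sum_(j' < n.+1) Sp S l mu j' j * yk n m y (l%:Z + j'%:Z) x mu.
Proof.
move=> hS [|l] mu x j /=.
  by rewrite sum_delta_yk.
by rewrite add0r (@stokes_row0 _ _ _ _ _ hS l.+1).
Qed.

Lemma comp_Sp (R : realType) n m y S :
  @is_stokes R n m y S -> @lin_indep_yk R n m y ->
  forall (l : nat) (mu : Cplx R),
  Sp S l.+1 mu = S 1%N (mu * qpow (m + n + 1) l%:~R) *m Sp S l mu.
Proof.
move=> hS hI l mu; apply/matrixP => i j.
move: i; apply: (@yk_uniq _ _ _ _ hI l.+1 mu) => x.
have -> : \sum_(j0 < n.+1) Sp S l.+1 mu j0 j * yk n m y (l.+1%:Z + j0%:Z) x mu
   = yk n m y (0 + j%:Z) x mu by rewrite (@expand_Sp _ _ _ _ _ hS l.+1).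
rewrite (@expand_Sp _ _ _ _ _ hS l).
symmetry; under eq_bigr do rewrite mxE mulr_suml.
rewrite exchange_big /=; apply: eq_bigr => j' _.
rewrite (@stokes_k _ _ _ _ _ hS l 1%N) // mulr_sumr.
apply: eq_bigr => j'' _.
have -> : (l%:Z + 1 = l.+1%:Z) by rewrite -PoszD addn1.
by rewrite [in RHS]mulrA [in RHS](mulrC (Sp S l mu j' j)).
Qed.

Lemma companion (R : realType) n m y S :
  @is_stokes R n m y S -> @lin_indep_yk R n m y ->
  forall (mu : Cplx R) (i j : 'I_n.+1), (0 < j)%N ->
  S 1%N mu i j = (i.+1 == j)%:R.
Proof.
move=> hS hI mu i j hj; move: i.
apply: (@yk_uniq _ _ _ _ hI 1 mu) => x.
rewrite -(@stokes_row0 _ _ _ _ _ hS 1%N) //.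
have hj' : (j.-1 < n.+1)%N by apply: leq_ltn_trans (leq_pred _) (ltn_ord j).
rewrite (bigD1 (Ordinal hj')) //= big1 ?addr0.
  rewrite /= prednK // eqxx mul1r -PoszD add1n prednK //.
move=> i hi; case: eqP; rewrite ?mul0r // => hij.
by case/eqP: hi; apply/val_inj => /=; rewrite -hij.
Qed.

Definition HH (R : realType) n (S : nat -> Cplx R -> 'M[Cplx R]_n.+1) (s : nat) (mu : Cplx R)
  : Cplx R := Sp S s mu ord0 ord0.
Arguments HH {R n} S s mu.

Lemma vec_Sp (R : realType) n m y S :
  @is_stokes R n m y S -> @lin_indep_yk R n m y ->
  forall (l : nat) (nu : Cplx R) (j : 'I_n.+1),
  Sp S l.+1 nu j ord0 = \sum_(s < l.+1)
    (if (j + l.+1 - s <= n.+1)%N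
     then tau S (j + l.+1 - s) (nu * qpow (m + n + 1) s%:~R) * HH S s nu else 0).
Proof.
move=> hS hI l nu; elim: l => [|l IH] j.
  rewrite big_ord1 /= subn0 addn1 ifT // /tau /HH /= mxE eqxx mulr1.
  by rewrite qpow0 mulr1 inord_val.
rewrite (@comp_Sp _ _ _ _ _ hS hI) mxE big_ord_recl big_ord_recr /=.
rewrite addrC; congr (_ + _).
  have -> : (j + l.+2 - l.+1 = j.+1)%N by lia.
  by rewrite ifT // /tau /HH /= inord_val.
under eq_bigr do rewrite (@companion _ _ _ _ _ hS hI) //.
case: (ltnP j n) => hjn.
  rewrite (bigD1 (Ordinal hjn)) //= eqxx mul1r big1 ?addr0; last first.
    move=> k hk; case: eqP; rewrite ?mul0r // => /eqP; rewrite eqSS => hk'.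
    by case/eqP: hk; apply/val_inj => /=; rewrite (eqP hk').
  have hj1 : (j.+1 < n.+1)%N by [].
  have -> : lift ord0 (Ordinal hjn) = Ordinal hj1 by apply/val_inj.
  have := IH (Ordinal hj1); rewrite /= => ->; apply: eq_bigr => s _ /=.
  by rewrite addSnnS.
rewrite big1; last first.
  move=> k _; have := ltn_ord k => hk.
  case: eqP; rewrite ?mul0r // => /eqP; rewrite eqSS => /eqP hk'.
  by move: hk; rewrite -hk' ltnNge hjn.
rewrite big1 // => s _.
have hjn' : nat_of_ord j = n by apply/eqP; rewrite eqn_leq hjn -ltnS ltn_ord.
have hs := ltn_ord s.
by rewrite hjn' ifF //; apply/negbTE; rewrite -ltnNge; lia.
Qed.

Definition cp (R : realType) n (S : nat -> Cplx R -> 'M[Cplx R]_n.+1) (b : nat) (mu : Cplx R)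
  : Cplx R := if b is 0 then -1 else tau S b mu.
Arguments cp {R n} S b mu.

Lemma recur (R : realType) n m y S :
  @is_stokes R n m y S -> @lin_indep_yk R n m y ->
  forall (A : nat) (mu : Cplx R), (1 <= A <= n.+1)%N ->
  \sum_(s < A.+1) cp S (A - s) (mu * qpow (m + n + 1) s%:~R) * HH S s mu = 0.
Proof.
move=> hS hI [|l] mu // /andP [_ hl].
rewrite big_ord_recr /= subnn /= mulN1r.
rewrite {2}/HH (@vec_Sp _ _ _ _ _ hS hI) /=.
apply/eqP; rewrite subr_eq0; apply/eqP; apply: eq_bigr => s _.
rewrite add0n ifT; last by have := ltn_ord s; lia.
by rewrite /cp subSn // -ltnS.
Qed.

Definition Hz (R : realType) n (S : nat -> Cplx R -> 'M[Cplx R]_n.+1) (l : int) (mu : Cplx R)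
  : Cplx R := if (0 <= l)%R then HH S `|l|%N mu else 0.
Arguments Hz {R n} S l mu.

Lemma colw (R : realType) n m y S :
  @is_stokes R n m y S -> @lin_indep_yk R n m y ->
  forall (a' : nat) (nu : Cplx R) (i : nat), (a' < n.+1)%N -> (i <= a')%N ->
  \sum_(k < a'.+1) Hz S (1 - i%:Z + k%:Z) (nu * qpow (m + n + 1) i%:~R)
       * cp S (a' - k) (nu * qpow (m + n + 1) k.+1%:~R)
  = if i == 0%N then - tau S a'.+1 nu else 0.
Proof.
move=> hS hI a' nu [|i'] ha hi.
  have := @recur _ _ _ _ _ hS hI a'.+1 nu.
  rewrite ltnS ha /= => /(_ isT).
  rewrite big_ord_recl /= subn0 qpow0 mulr1 /HH /= mxE eqxx mulr1 => /eqP.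
  rewrite addrC addr_eq0 => /eqP <-; apply: eq_bigr => k _.
  have -> : (1 - 0%Z + k%:Z = (k.+1)%:Z) by lia.
  rewrite /Hz /= /bump /= add1n.
  by rewrite subSS mulrC.
rewrite /=.
have := @recur _ _ _ _ _ hS hI (a' - i') (nu * qpow (m + n + 1) i'.+1%:~R).
have hc : (1 <= a' - i' <= n.+1)%N by apply/andP; split; lia.
move=> /(_ hc) hrec; rewrite -[in RHS]hrec.
rewrite -(big_mkord xpredT (fun k : nat => Hz S (1 - i'.+1%:Z + k%:Z) (nu * qpow (m+n+1) i'.+1%:~R) * cp S (a' - k) (nu * qpow (m + n + 1) k.+1%:~R))).
rewrite -(big_mkord xpredT (fun s : nat => cp S (a' - i' - s) (nu * qpow (m+n+1) i'.+1%:~R * qpow (m + n + 1) s%:~R) * HH S s (nu * qpow (m+n+1) i'.+1%:~R))).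
rewrite [LHS](@big_cat_nat _ _ _ i') //=; last by lia.
rewrite [X in X + _]big1_seq ?add0r; last first.
  move=> k; rewrite mem_index_iota => /andP [_ hk]; rewrite /Hz.
  case: ifP => h; last by rewrite mul0r.
  exfalso; lia.
rewrite -{1}[i']add0n big_addn.
have -> : (a'.+1 - i' = (a' - i').+1)%N by lia.
apply: eq_bigr => s _.
have -> : (1 - i'.+1%:Z + (s + i')%N%:Z = s%:Z) by lia.
have -> : (a' - (s + i') = a' - i' - s)%N by lia.
rewrite /Hz /= mulrC mulqq.
congr (cp _ _ (_ * qpow _ _) * _).
rewrite -intrD; congr (_ %:~R); lia.
Qed.

Lemma detM (R : realType) n m y S :
  @is_stokes R n m y S -> @lin_indep_yk R n m y ->
  forall (a' : nat) (nu : Cplx R), (a' < n.+1)%N ->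
  \det (\matrix_(i < a'.+1, j < a'.+1) Hz S (1 - i%:Z + j%:Z) (nu * qpow (m + n + 1) i%:~R))
  = (-1) ^+ a'.+2 * tau S a'.+1 nu.
Proof.
move=> hS hI a' nu ha.
set M := \matrix_(i < a'.+1, j < a'.+1) _.
pose w (i : 'I_a'.+1) := cp S (a' - i) (nu * qpow (m + n + 1) (i.+1)%:~R).
pose W : 'M[Cplx R]_a'.+1 := \matrix_(i, j) if j == ord_max then w i else (i == j)%:R.
have dW : \det W = -1.
  rewrite -det_tr det_trig; last first.
    apply/is_trig_mxP => i j hij; rewrite !mxE.
    have -> : (i == ord_max) = false.
      by apply/negbTE; rewrite -val_eqE /= neq_ltn (leq_trans hij) // -ltnS.
    by rewrite eq_sym -val_eqE /= ltn_eqF.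
  rewrite big_ord_recr /= big1 ?mul1r; last first.
    move=> i _; rewrite !mxE eqxx.
    have -> : (widen_ord (leqnSn a') i == ord_max) = false.
      by apply/negbTE; rewrite -val_eqE /= neq_ltn ltn_ord.
    by [].
  by rewrite !mxE eqxx /w /= subnn.
set M' : 'M[Cplx R]_a'.+1 := \matrix_(i, j)
   if j == ord_max then (if i == ord0 then - tau S a'.+1 nu else 0) else M i j.
have MW : M *m W = M'.
  apply/matrixP => i j; rewrite !mxE.
  case: eqP => [->|hj].
    rewrite -(@colw _ _ _ _ _ hS hI a' nu i) //; last by rewrite -ltnS.
    by apply: eq_bigr => k _; rewrite !mxE eqxx.
  rewrite (bigD1 j) //= big1 ?addr0; last first.
    move=> k hk; rewrite !mxE.
    by move/eqP: hj => /negbTE ->; rewrite (negbTE hk) mulr0.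
  by rewrite !mxE eqxx (introF eqP hj) mulr1.
have dM' : \det M' = - tau S a'.+1 nu * (-1) ^+ a'.
  rewrite (expand_det_col _ ord_max) big_ord_recl big1 ?addr0; last first.
    by move=> i _; rewrite !mxE eqxx /= mul0r.
  rewrite !mxE eqxx /= /cofactor add0n; congr (_ * _).
  rewrite -det_tr det_trig; last first.
    apply/is_trig_mxP => i j hij; rewrite !mxE.
    have -> : (lift ord_max i == ord_max) = false.
      by apply/negbTE; rewrite eq_sym neq_lift.
    have e1 : (lift ord_max i : nat) = i by rewrite /= /bump leqNgt (ltn_ord i) add0n.
    have e2 : (lift ord0 j : nat) = j.+1 by [].
    rewrite e1 e2 /Hz; case: ifP => // h; exfalso; lia.
  rewrite big1 ?mulr1 //= => i _; rewrite !mxE.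
  have -> : (lift ord_max i == ord_max) = false.
    by apply/negbTE; rewrite eq_sym neq_lift.
  have e1 : (lift ord_max i : nat) = i by rewrite /= /bump leqNgt (ltn_ord i) add0n.
  have e2 : (lift ord0 i : nat) = i.+1 by [].
  rewrite e1 e2 /Hz.
  have -> : (1 - i.+1%:Z + i%:Z = 0) by lia.
  by rewrite /= /HH /= mxE.
have := congr1 determinant MW; rewrite det_mulmx dW dM' => /eqP.
rewrite mulrN1 mulNr eqr_opp => /eqP ->.
rewrite mulrC.
by rewrite !exprS !mulN1r opprK.
Qed.

Theorem mainTheorem3 (R : realType) (n m : nat)
    (y : Cplx R -> Cplx R -> Cplx R)
    (S : nat -> Cplx R -> 'M[Cplx R]_n.+1) :
  (1 <= n)%N -> (1 <= m)%N ->
  @is_solution R n m y ->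
  @lin_indep_yk R n m y ->
  @is_stokes R n m y S ->
  forall (a : nat), (1 <= a <= n.+1)%N ->
  forall lam : Cplx R,
    @Ta1 R n m S a lam =
    \det (\matrix_(i < a, j < a)
            @T1 R n m S (1 - i%:Z + j%:Z)
               (lam * qpow (m + n + 1)
                  ((i.+1%:Z + j.+1%:Z - a%:Z - 1)%:~R / 2))).
Proof.
move=> _ _ _ hI hS [|a'] // /andP [_ ha] lam.
rewrite /Ta1.
set nu := lam * _.
rewrite -(@detM _ _ _ _ _ hS hI a' nu ha).
congr (\det _); apply/matrixP => i j; rewrite !mxE.
rewrite /T1 /Hz.
set l := (1 - i%:Z + j%:Z).
have [hl|hl] := boolP (0 < l).
  rewrite ifT ?ltW //.
  have : (0 < `|l|)%N by rewrite absz_gt0 gt_eqF.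
  case e : `|l|%N => [|k] // _.
  rewrite /HH /= /nu !mulqq.
  congr (S _ (_ * qpow _ _) _ _).
  have el : l = k.+1%:Z by rewrite -e gtz0_abs.
  rewrite /l !(intrD, intrB, intrN).
  move: (nat_of_ord i) (nat_of_ord j) => i0 j0.
  rewrite -[i0.+1]addn1 -[j0.+1]addn1 -[a'.+1]addn1 !PoszD !intrD; lra.
have [el|hl0] := eqVneq l 0.
  by rewrite el /= /HH /= mxE.
case: ifP => // h; exfalso; lia.
Qed.
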